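(* There is an absolute constant $C<\infty$ such that for every $n\ge1$, $\|M_{\mathrm{Sen}(\mathcal S)}\|_{2\to2}\le C\,\|M_{\mathrm{Sen}(\mathcal N)}\|_{2\to2}$.
   Context: Let $\mathbb{I}^n=\{0,1\}^n$ with Hamming distance $d$, and $V=\mathbb{R}^{\mathbb{I}^n}$ with $\|f\|_2=(\sum_x f(x)^2)^{1/2}$. For $0\le k\le n$, $(S_kf)(x)=\binom{n}{k}^{-1}\sum_{y:\,d(x,y)=k}f(y)$. For a family $\mathcal A$ of linear operators on $V$, $(M_{\mathcal A}f)(x)=\sup_{A\in\mathcal A}(Af)(x)$. $\mathcal S=\{S_k\}_{k=0}^n$ and $\mathrm{Sen}(\mathcal S)_k=\frac{1}{k+1}\sum_{\ell=0}^kS_\ell$ for $0\le k\le n$. For real $t\ge0$, with $p=(1-e^{-t})/2$, the noise operator is $N_t=\sum_{k=0}^n\binom nk p^k(1-p)^{n-k}S_k$, and $\mathrm{Sen}(\mathcal N)=\{\mathrm{Sen}(\mathcal N)_T\}_{T\ge0}$ with $\mathrm{Sen}(\mathcal N)_T=\frac1T\int_0^TN_t\,dt$ for $T>0$ and $\mathrm{Sen}(\mathcal N)_0=N_0=$ identity (the limit as $T\downarrow0$). For a sublinear operator $M$, $\|M\|_{2\to2}=\sup_{f\ne0}\|Mf\|_2/\|f\|_2$. *)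

(* Defs.v *)
From HB Require Import structures.
From mathcomp Require Import all_boot all_order all_algebra.
From mathcomp Require Import all_classical all_reals all_analysis.
Set Implicit Arguments. Unset Strict Implicit. Unset Printing Implicit Defensive.
Import Order.TTheory GRing.Theory Num.Theory.
Import numFieldNormedType.Exports.
Local Open Scope classical_set_scope.
Local Open Scope ring_scope.

Definition cube (n : nat) := {ffun 'I_n -> bool}.

Definition hamming (n : nat) (x y : cube n) : nat := #|[set i | x i != y i]|.

Section Ops.
Variable R : realType.
Variable n : nat.

Definition fn := cube n -> R.

Definition Sph (k : nat) (f : fn) : fn := fun x =>
  ('C(n, k)%:R)^-1 * \sum_(y : cube n | hamming x y == k) f y.

Definition SenS (k : nat) (f : fn) : fn := fun x =>
  (k.+1%:R)^-1 * \sum_(l < k.+1) Sph l f x.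

Definition noise_p (t : R) : R := (1 - expR (- t)) / 2.
Definition Noise (t : R) (f : fn) : fn := fun x =>
  \sum_(k < n.+1) 'C(n, k)%:R * noise_p t ^+ k * (1 - noise_p t) ^+ (n - k)
     * Sph k f x.

Definition SenN (T : R) (f : fn) : fn := fun x =>
  if T == 0 then f x
  else T^-1 * (\int[lebesgue_measure]_(t in `[0, T]) Noise t f x).

Definition maxop (I : Type) (D : set I) (A : I -> fn -> fn) (f : fn) : fn :=
  fun x => sup [set A i f x | i in D].

Definition l2norm (f : fn) : R := Num.sqrt (\sum_(x : cube n) f x ^+ 2).

Definition opnorm (M : fn -> fn) : R :=
  sup [set l2norm (M f) / l2norm f | f in [set f : fn | exists x, f x != 0]].

Definition MSenS : fn -> fn := maxop [set k : nat | (k <= n)%N] SenS.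
Definition MSenN : fn -> fn := maxop [set T : R | 0 <= T] SenN.

End Ops.

(* Main.v *)
Require Import Defs.
From HB Require Import structures.
From mathcomp Require Import all_boot all_order all_algebra.
From mathcomp Require Import all_classical all_reals all_analysis.
From mathcomp Require Import ring lra zify.
Set Implicit Arguments. Unset Strict Implicit. Unset Printing Implicit Defensive.
Import Order.TTheory GRing.Theory Num.Theory.
Import numFieldNormedType.Exports.
Local Open Scope classical_set_scope.
Local Open Scope ring_scope.

Section Bin.
Variable R : realType.

Definition bt (m i : nat) (p : R) : R :=
  'C(m, i)%:R * p ^+ i * (1 - p) ^+ (m - i).
Definition Gc (m j : nat) (p : R) : R := \sum_(i < j.+1) bt m i p.

Lemma bt_ge0 m i p : 0 <= p -> p <= 1 -> 0 <= bt m i p.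
Proof.
move=> p0 p1; rewrite /bt; apply: mulr_ge0; last by apply: exprn_ge0; rewrite subr_ge0.
by apply: mulr_ge0 => //; apply: exprn_ge0.
Qed.

Lemma sum_bt m p : \sum_(i < m.+1) bt m i p = 1.
Proof.
have := exprDn (1 - p) p m; rewrite subrK expr1n => ->.
by apply: eq_bigr => i _; rewrite /bt -mulr_natl; ring.
Qed.

Lemma bt_le1 m i p : 0 <= p -> p <= 1 -> bt m i p <= 1.
Proof.
move=> p0 p1; case: (leqP i m) => im; last by rewrite /bt bin_small // mul0r mul0r.
rewrite -(sum_bt m p) (bigD1 (Ordinal (im : (i < m.+1)%N))) //=.
by rewrite lerDl; apply: sumr_ge0 => k _; exact: bt_ge0.
Qed.

Lemma mom1 m p : \sum_(i < m.+1) i%:R * bt m i p = m%:R * p.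
Proof.
case: m => [|k]; first by rewrite big_ord_recl big_ord0 mul0r addr0 mul0r.
rewrite big_ord_recl /= mul0r add0r.
transitivity (\sum_(i < k.+1) k.+1%:R * p * bt k i p); last first.
  by rewrite -mulr_sumr sum_bt mulr1.
apply: eq_bigr => i _; rewrite /bt /bump /= add1n subSS.
have h := mul_bin_diag k.+1 i; rewrite /= in h.
have h' : (i.+1%:R * 'C(k.+1, i.+1)%:R = k.+1%:R * 'C(k, i)%:R :> R).
  by rewrite -!natrM -h.
rewrite exprS; transitivity ((i.+1%:R * 'C(k.+1, i.+1)%:R) * p * p ^+ i * (1 - p) ^+ (k - i)); first by ring.
by rewrite h'; ring.
Qed.

Lemma mom2 m p : \sum_(i < m.+1) (i%:R) ^+ 2 * bt m i p = m%:R * p * ((m.-1)%:R * p + 1).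
Proof.
case: m => [|k]; first by rewrite big_ord_recl big_ord0 expr0n /= mul0r addr0 !mul0r.
rewrite big_ord_recl /= expr0n /= mul0r add0r.
transitivity (\sum_(i < k.+1) k.+1%:R * p * ((i%:R + 1) * bt k i p)); last first.
  rewrite -mulr_sumr.
  under eq_bigr do rewrite mulrDl mul1r.
  by rewrite big_split /= mom1 sum_bt.
apply: eq_bigr => i _; rewrite /bt /bump /= add1n subSS.
have h := mul_bin_diag k.+1 i; rewrite /= in h.
have h' : (i.+1%:R * 'C(k.+1, i.+1)%:R = k.+1%:R * 'C(k, i)%:R :> R).
  by rewrite -!natrM -h.
rewrite [p ^+ i.+1]exprS; transitivity (i.+1%:R * (i.+1%:R * 'C(k.+1, i.+1)%:R) * p * p ^+ i * (1 - p) ^+ (k - i)); first by ring.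
by rewrite h' -[i.+1]addn1 natrD; ring.
Qed.


Lemma amgm (x c : R) : 0 < c -> x <= x ^+ 2 / (4 * c) + c.
Proof.
move=> c0; rewrite -subr_ge0.
have -> : x ^+ 2 / (4 * c) + c - x = (x - 2 * c) ^+ 2 / (4 * c).
  by field; rewrite gt_eqF.
by apply: divr_ge0; [exact: sqr_ge0 | lra].
Qed.

Lemma GcE m j p : (j <= m)%N ->
  Gc m j p = \sum_(i < m.+1 | (i < j.+1)%N) bt m i p.
Proof. by move=> jm; rewrite /Gc (big_ord_widen m.+1 (fun i => bt m i p)). Qed.

Lemma tailE m j p : (j <= m)%N ->
  1 - Gc m j p = \sum_(i < m.+1 | ~~ (i < j.+1)%N) bt m i p.
Proof.
move=> jm; rewrite GcE // -(sum_bt m p) (bigID (fun i : 'I_m.+1 => (i < j.+1)%N)) /=.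
by rewrite addrC addrK.
Qed.

Lemma tail_ge0 m j p : 0 <= p -> p <= 1 -> (j <= m)%N -> 0 <= 1 - Gc m j p.
Proof. by move=> p0 p1 jm; rewrite tailE //; apply: sumr_ge0 => i _; exact: bt_ge0. Qed.

Lemma Gc_ge0 m j p : 0 <= p -> p <= 1 -> 0 <= Gc m j p.
Proof. by move=> p0 p1; apply: sumr_ge0 => i _; exact: bt_ge0. Qed.

Lemma tail_ge m j p : 0 <= p -> p <= 1 -> 1 <= m%:R * p ->
  2 * j%:R <= m%:R * p -> (j <= m)%N -> 1 / 8 <= 1 - Gc m j p.
Proof.
move=> p0 p1 mu1 jmu jm.
set mu := m%:R * p in mu1 jmu *.
set tl := 1 - Gc m j p.
have tl0 : 0 <= tl by exact: tail_ge0.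
have Gc1 : Gc m j p <= 1 by rewrite /tl in tl0; lra.
have c0 : 0 < 1 + mu by lra.
have := mom1 m p; rewrite (bigID (fun i : 'I_m.+1 => (i < j.+1)%N)) /= -/mu => hmu.
have low : \sum_(i < m.+1 | (i < j.+1)%N) i%:R * bt m i p <= j%:R.
  apply: (@le_trans _ _ (\sum_(i < m.+1 | (i < j.+1)%N) j%:R * bt m i p)).
    apply: ler_sum => i ij; apply: ler_wpM2r; first exact: bt_ge0.
    by rewrite ler_nat -ltnS.
  by rewrite -mulr_sumr -GcE // ler_piMr // ler0n.
have high : \sum_(i < m.+1 | ~~ (i < j.+1)%N) i%:R * bt m i p <=
    mu / 4 + (1 + mu) * tl.
  apply: (@le_trans _ _ (\sum_(i < m.+1 | ~~ (i < j.+1)%N)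
      ((i%:R) ^+ 2 / (4 * (1 + mu)) * bt m i p + (1 + mu) * bt m i p))).
    apply: ler_sum => i _; rewrite -mulrDl; apply: ler_wpM2r; first exact: bt_ge0.
    exact: amgm.
  rewrite big_split /= -mulr_sumr -tailE // lerD2r.
  apply: (@le_trans _ _ (\sum_(i < m.+1) (i%:R) ^+ 2 / (4 * (1 + mu)) * bt m i p)).
    rewrite [X in _ <= X](bigID (fun i : 'I_m.+1 => (i < j.+1)%N)) /= lerDr.
    apply: sumr_ge0 => i _; apply: mulr_ge0; last exact: bt_ge0.
    by apply: divr_ge0; [exact: sqr_ge0 | lra].
  under eq_bigr do rewrite mulrAC.
  rewrite -mulr_suml mom2 -/mu.
  have hm : (m.-1)%:R * p <= mu.
    by rewrite /mu ler_wpM2r // ler_nat leq_pred.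
  rewrite ler_pdivrMr; last lra.
  nra.
rewrite -/tl; nra.
Qed.


Lemma bt_half m i : (i <= m)%N -> bt m i (1 / 2) = 'C(m, i)%:R * (1 / 2) ^+ m.
Proof.
move=> im; rewrite /bt -mulrA; congr (_ * _).
have -> : 1 - 1 / 2 = 1 / 2 :> R by field.
by rewrite -exprD subnKC.
Qed.

Lemma Gc_half m j : (2 * j < m)%N -> Gc m j (1 / 2) <= 1 / 2.
Proof.
move=> jm; have jm' : (j <= m)%N by lia.
have hp0 : 0 <= 1 / 2 :> R by lra.
have hp1 : 1 / 2 <= 1 :> R by lra.
suff : Gc m j (1 / 2) <= 1 - Gc m j (1 / 2) by lra.
rewrite tailE // GcE //.
rewrite (reindex_inj rev_ord_inj) /=.
rewrite big_mkcond [X in _ <= X]big_mkcond /=.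
apply: ler_sum => i _.
have im : (i <= m)%N by rewrite -ltnS.
rewrite subSS.
case: ifP => h1.
  have h2 : ~~ (i < j.+1)%N by lia.
  rewrite h2 bt_half ?leq_subr // bt_half // bin_sub //.
case: ifP => _ //; exact: bt_ge0.
Qed.

End Bin.

Section S. Variable R : realType.
Lemma bt_derive m i (p : R) : is_derive p 1 (bt m i)
  ('C(m,i)%:R * (i%:R * p^+i.-1 * (1-p)^+(m-i) - p^+i * ((m-i)%:R * (1-p)^+(m-i).-1))).
Proof.
have -> : bt m i = ('C(m,i)%:R \*: ((@id R) ^+ i)) * ((cst 1 - @id R) ^+ (m - i)).
  by apply/funext => q; rewrite /bt /= !fctE.
apply: is_derive_eq.
rewrite !fctE /= /GRing.scale /=. ring.
Qed.

Definition dbt m i (p : R) := 'C(m,i)%:R * (i%:R * p^+i.-1 * (1-p)^+(m-i) - p^+i * ((m-i)%:R * (1-p)^+(m-i).-1)).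

Lemma dbt_tel n j (p : R) : (j <= n)%N -> \sum_(i < j.+1) dbt n.+1 i p = - (n.+1%:R * bt n j p).
Proof.
elim: j => [|j IH] jn.
  by rewrite big_ord1 /dbt /bt !bin0 !subn0 /=; ring.
rewrite big_ord_recr /= IH; last by lia.
have h1 := mul_bin_diag n.+1 j; rewrite /= in h1.
have h2 := mul_bin_down n.+1 j.+1; rewrite /= subSS in h2.
have h1' : (j.+1%:R * 'C(n.+1, j.+1)%:R = n.+1%:R * 'C(n, j)%:R :> R) by rewrite -!natrM h1.
have h2' : ((n - j)%:R * 'C(n.+1, j.+1)%:R = n.+1%:R * 'C(n, j.+1)%:R :> R) by rewrite -!natrM h2.
rewrite /dbt /bt subSS /= -subnS.
transitivity (- (n.+1%:R * ('C(n, j)%:R * p ^+ j * (1 - p) ^+ (n - j))) +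
   ((j.+1%:R * 'C(n.+1, j.+1)%:R) * p ^+ j * (1 - p) ^+ (n - j) -
    ((n - j)%:R * 'C(n.+1, j.+1)%:R) * p ^+ j.+1 * (1 - p) ^+ (n - j.+1))); first by ring.
by rewrite h1' h2'; ring.
Qed.

Lemma Gc_derive n j (p : R) : (j <= n)%N ->
  is_derive p 1 (Gc n.+1 j) (- (n.+1%:R * bt n j p)).
Proof.
move=> jn; rewrite -dbt_tel //.
have -> : Gc n.+1 j = (fun q => \sum_(i < j.+1) bt n.+1 i q) by [].
rewrite -fct_sumE.
by apply: is_derive_sum => i; exact: bt_derive.
Qed.

Lemma noise_p_derive (t : R) : is_derive t 1 (@noise_p R) (expR (- t) / 2).
Proof.
have -> : @noise_p R = (fun t => 2^-1 * t) \o (fun t => 1 - t) \o (expR \o (fun t => - t)).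
  by apply/funext => u; rewrite /noise_p /= mulrC.
apply: is_derive_eq.
by rewrite /GRing.scale /=; field.
Qed.
End S.

Section S. Variable R : realType.

Lemma der_cont (h : R -> R) : (forall x, derivable h x 1) -> continuous h.
Proof. by move=> dh x; apply/differentiable_continuous/derivable1_diffP/dh. Qed.

Definition betaf n j (t : R) := bt n j (noise_p t).
Definition wf n j (t : R) := expR (- t) * betaf n j t.
Definition Hf n j (t : R) := - (2 / n.+1%:R) * Gc n.+1 j (noise_p t).

Lemma Hf_derive n j (t : R) : (j <= n)%N -> is_derive t (1:R) (Hf n j) (wf n j t).
Proof.
move=> jn.
have -> : Hf n j = (fun u => - (2 / n.+1%:R) * u) \o (Gc n.+1 j \o @noise_p R).
  by apply/funext => u.
have h1 := noise_p_derive t.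
have h2 := Gc_derive (noise_p t) jn.
have h3 := is_derive1_comp h2 h1.
have h4 : is_derive (Gc n.+1 j (noise_p t)) (1:R) (fun u : R => - (2 / n.+1%:R) * u) (- (2 / n.+1%:R)).
  have -> : (fun u : R => - (2 / n.+1%:R) * u) = (- (2 / n.+1%:R)) \*: id by apply/funext.
  apply: is_derive_eq.
  by rewrite /GRing.scale /= mulr1.
have h5 := @is_derive1_comp R _ (Gc n.+1 j \o @noise_p R) t _ _ h4 h3.
apply: (is_derive_eq h5).
rewrite /wf /betaf; field; by rewrite addrC natr1 pnatr_eq0.
Qed.

Lemma Hf_cont n j : (j <= n)%N -> continuous (Hf n j).
Proof. by move=> jn; apply: der_cont => x; by have [] := Hf_derive x jn. Qed.

Lemma wf_der n j x : derivable (wf n j) x 1.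
Proof.
have -> : wf n j = (expR \o (fun t : R => - t)) * (bt n j \o @noise_p R).
  by apply/funext => u.
apply: derivableM.
  have e1 := is_derive_expR (- x).
  have e2 : is_derive x (1:R) (fun t : R => - t) (-1) by exact: is_deriveNid.
  by have [] := @is_derive1_comp R expR (fun t => - t) x _ _ e1 e2.
have e1 := bt_derive n j (noise_p x).
have e2 := noise_p_derive x.
by have [] := @is_derive1_comp R (bt n j) (@noise_p R) x _ _ e1 e2.
Qed.

Lemma wf_cont n j : continuous (wf n j).
Proof. by apply: der_cont => x; exact: wf_der. Qed.

Lemma int_wf n j (a b : R) : (j <= n)%N -> a < b ->
  \int[lebesgue_measure]_(t in `[a, b]) wf n j t = Hf n j b - Hf n j a.
Proof.
move=> jn ab.
have cf : {within `[a, b], continuous (wf n j)} by apply: continuous_subspaceT; exact: wf_cont.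
have dF : derivable_oo_LRcontinuous (Hf n j) a b.
  split.
  - by move=> x _; by have [] := Hf_derive x jn.
  - by apply: cvg_at_right_filter; exact: Hf_cont.
  - by apply: cvg_at_left_filter; exact: Hf_cont.
have F'f : {in `]a, b[, derive1 (Hf n j) =1 wf n j}.
  by move=> x _; rewrite derive1E; have [] := Hf_derive x jn.
by rewrite /Rintegral (continuous_FTC2 ab cf dF F'f) -EFinB.
Qed.

Lemma cint (f : R -> R) (a b : R) : continuous f ->
  (@lebesgue_measure R).-integrable `[a, b] (EFin \o f).
Proof.
move=> cf; apply: continuous_compact_integrable; first exact: segment_compact.
exact: continuous_subspaceT.
Qed.

Lemma Rint_sub (f : R -> R) (a b c d : R) : continuous f -> c <= a -> b <= d ->
  (forall x, c <= x -> x <= d -> 0 <= f x) ->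
  \int[lebesgue_measure]_(t in `[a, b]) f t <= \int[lebesgue_measure]_(t in `[c, d]) f t.
Proof.
move=> cf ca bd f0; rewrite /Rintegral; apply: fine_le.
- exact: integrable_fin_num (cint a b cf).
- exact: integrable_fin_num (cint c d cf).
apply: ge0_subset_integral => //.
- by case/integrableP: (cint c d cf).
- by move=> x /=; rewrite in_itv /= => /andP[h1 h2]; rewrite lee_fin; apply: f0.
- by move=> x /=; rewrite !in_itv /= => /andP[h1 h2]; rewrite (le_trans ca h1) (le_trans h2 bd).
Qed.

Lemma cont_scal (c : R) (f : R -> R) : continuous f -> continuous (fun x => c * f x).
Proof.
move=> cf; have -> : (fun x => c * f x) = cst c * f by apply/funext.
by move=> x; apply: continuousM; [exact: cst_continuous | exact: cf].
Qed.

Lemma betaf_cont n j : continuous (betaf n j).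
Proof.
apply: der_cont => x.
have e1 := bt_derive n j (noise_p x).
have e2 := noise_p_derive x.
by have [] := @is_derive1_comp R (bt n j) (@noise_p R) x _ _ e1 e2.
Qed.

Lemma noise_p_ge0 (t : R) : 0 <= t -> 0 <= noise_p t.
Proof.
move=> t0; rewrite /noise_p; apply: divr_ge0; last lra.
rewrite subr_ge0 -expR0 ler_expR; lra.
Qed.

Lemma noise_p_le1 (t : R) : noise_p t <= 1.
Proof.
rewrite /noise_p ler_pdivrMr; last lra.
have := expR_ge0 (- t); lra.
Qed.

Lemma betaf_ge0 n j (t : R) : 0 <= t -> 0 <= betaf n j t.
Proof. by move=> t0; apply: bt_ge0; [exact: noise_p_ge0 | exact: noise_p_le1]. Qed.

Lemma int_beta_ge n j (a b T : R) : (j <= n)%N -> 0 <= a -> a < b -> b <= T ->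
  2 * expR a / n.+1%:R * (Gc n.+1 j (noise_p a) - Gc n.+1 j (noise_p b)) <=
  \int[lebesgue_measure]_(t in `[0, T]) betaf n j t.
Proof.
move=> jn a0 ab bT.
have hs := Rint_sub (@betaf_cont n j) a0 bT (fun x x0 _ => @betaf_ge0 n j x x0).
apply: le_trans hs.
have -> : 2 * expR a / n.+1%:R * (Gc n.+1 j (noise_p a) - Gc n.+1 j (noise_p b)) =
  expR a * \int[lebesgue_measure]_(t in `[a, b]) wf n j t.
  rewrite int_wf // /Hf; field; by rewrite addrC natr1 pnatr_eq0.
rewrite -RintegralZl //; last exact: cint (@wf_cont n j).
apply: le_Rintegral => //.
- by apply: cint; apply: cont_scal; exact: wf_cont.
- exact: cint (@betaf_cont n j).
move=> x /=; rewrite in_itv /= => /andP[ax xb].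
rewrite /wf mulrA -expRD; rewrite -[X in _ <= X]mul1r; apply: ler_wpM2r.
  by apply: betaf_ge0; apply: le_trans ax.
by rewrite -expR0 ler_expR; lra.
Qed.
End S.

Section S. Variable R : realType.

Lemma cont_sum N (F : nat -> R -> R) : (forall k, continuous (F k)) ->
  continuous (fun t => \sum_(k < N) F k t).
Proof.
move=> cF; elim: N => [|N IH].
  have -> : (fun t : R => \sum_(k < 0) F k t) = cst 0 by apply/funext => t; rewrite big_ord0.
  exact: cst_continuous.
have -> : (fun t => \sum_(k < N.+1) F k t) = (fun t => \sum_(k < N) F k t) + F N.
  by apply/funext => t; rewrite big_ord_recr.
by move=> x; apply: continuousD; [exact: IH | exact: cF].
Qed.

Lemma Rint_sum N (F : nat -> R -> R) (a b : R) : (forall k, continuous (F k)) ->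
  \int[lebesgue_measure]_(t in `[a, b]) (\sum_(k < N) F k t) =
  \sum_(k < N) \int[lebesgue_measure]_(t in `[a, b]) F k t.
Proof.
move=> cF; elim: N => [|N IH].
  rewrite big_ord0; under eq_Rintegral do rewrite big_ord0.
  by rewrite Rintegral_cst // mul0r.
under eq_Rintegral do rewrite big_ord_recr.
rewrite RintegralD //; first by rewrite IH big_ord_recr.
- by apply: cint; exact: cont_sum.
- exact: cint.
Qed.

Lemma SenN_expand n (T : R) (g : fn R n) x : 0 < T ->
  SenN T g x = T^-1 * \sum_(k < n.+1) Sph k g x *
     \int[lebesgue_measure]_(t in `[0, T]) betaf n k t.
Proof.
move=> T0; rewrite /SenN gt_eqF //; congr (_ * _).
rewrite /Noise (Rint_sum _ (F := fun k t => betaf n k t * Sph k g x)).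
  apply: eq_bigr => k _; rewrite RintegralZr //; first by rewrite mulrC.
  exact: cint (@betaf_cont _ n k).
move=> k; have -> : (fun t => betaf n k t * Sph k g x) = betaf n k * cst (Sph k g x) by apply/funext.
by move=> y; apply: continuousM => //; [exact: betaf_cont | exact: cst_continuous].
Qed.

Lemma Gc0 m j : Gc m j (0 : R) = 1.
Proof.
rewrite /Gc big_ord_recl /bt bin0 expr0 subr0 expr1n !mul1r.
by rewrite big1 ?addr0 // => i _; rewrite expr0n /= mulr0 mul0r.
Qed.

Lemma Gc_near_half n j (P : R) : (2 * j <= n)%N -> 0 <= P -> P <= 1 / 2 ->
  Gc n.+1 j P <= 1 / 2 + n.+1%:R * (1 / 2 - P).
Proof.
move=> jn P0 P1.
have jn' : (j <= n)%N by lia.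
have cG : {within `[P, 1 / 2], continuous (Gc n.+1 j)}.
  apply: continuous_subspaceT; apply: der_cont => y.
  by have [] := Gc_derive y jn'.
have [c /andP [] ] := MVT_segment P1 (fun y _ => Gc_derive y jn') cG.
rewrite !bnd_simp => Pc c1 heq.
have hG := @Gc_half R n.+1 j (ltac:(lia)).
have hb := bt_le1 n j (le_trans P0 Pc) (le_trans c1 (ltac:(lra) : (1 / 2 : R) <= 1)).
have hb0 := bt_ge0 n j (le_trans P0 Pc) (le_trans c1 (ltac:(lra) : (1 / 2 : R) <= 1)).
have hn : 0 <= n.+1%:R :> R by rewrite ler0n.
have hd : 0 <= 1 / 2 - P by lra.
have : Gc n.+1 j P = Gc n.+1 j (1 / 2) + n.+1%:R * bt n j c * (1 / 2 - P) by rewrite -[Gc _ _ P]subr0; lra.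
move=> ->; rewrite lerD // -mulrA ler_wpM2l // -[X in _ <= X]mul1r ler_wpM2r //.
Qed.

Lemma noise_p0 : noise_p (0 : R) = 0.
Proof. by rewrite /noise_p oppr0 expR0 subrr mul0r. Qed.

Lemma noise_p_le_half (t : R) : noise_p t <= 1 / 2.
Proof. rewrite /noise_p; have := expR_ge0 (- t); lra. Qed.

Lemma tele (u : nat -> R) N : \sum_(i < N) (u i - u i.+1) = u 0%N - u N.
Proof.
elim: N => [|N IH]; first by rewrite big_ord0 subrr.
by rewrite big_ord_recr /= IH addrA subrK.
Qed.

Lemma mix_beta n j : (2 * j <= n)%N ->
  1 / (2 * n.+1%:R) <= \sum_(i < (2 * n.+1)%N) expR (- (i%:R)) *
      \int[lebesgue_measure]_(t in `[0, i.+1%:R]) betaf n j (t : R).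
Proof.
move=> jn; have jn' : (j <= n)%N by lia.
set N := (2 * n.+1)%N.
have hm : 0 < n.+1%:R :> R by rewrite ltr0n.
pose u i := Gc n.+1 j (noise_p (i%:R : R)).
apply: (@le_trans _ _ (\sum_(i < N) (2 / n.+1%:R) * (u i - u i.+1))).
  rewrite -mulr_sumr.
  have -> : \sum_(i < N) (u i - u i.+1) = u 0%N - u N.
    by apply: tele.
  have u0 : u 0%N = 1 by rewrite /u noise_p0 Gc0.
  have uN : u N <= 3 / 4.
    rewrite /u; apply: (le_trans (Gc_near_half jn (noise_p_ge0 (ler0n _ N)) (noise_p_le_half _))).
    have hE : 2 * n.+1%:R <= expR (N%:R) :> R.
      apply: (le_trans _ (expR_ge1Dx _)); rewrite /N natrM; lra.
    have he : 0 < expR (N%:R) :> R := expR_gt0 _.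
    rewrite /noise_p expRN.
    have -> : 1 / 2 - (1 - (expR (N%:R))^-1) / 2 = 1 / (2 * expR (N%:R)) :> R.
      by field; rewrite gt_eqF.
    have -> : n.+1%:R * (1 / (2 * expR (N%:R))) = n.+1%:R / (2 * expR (N%:R)) :> R.
      by rewrite mul1r.
    suff : n.+1%:R / (2 * expR (N%:R)) <= 1 / 4 :> R by lra.
    rewrite ler_pdivrMr; last by rewrite mulr_gt0.
    lra.
  rewrite u0.
  have -> : 2 / n.+1%:R * (1 - u N) = (1 - u N) * 4 * (1 / (2 * n.+1%:R)) :> R.
    by field; rewrite gt_eqF.
  rewrite -[X in X <= _]mul1r ler_wpM2r //.
  lra.
apply: ler_sum => i _.
have hi : (i%:R : R) < i.+1%:R by rewrite ltr_nat.
apply: le_trans (ler_wpM2l (expR_ge0 _) (int_beta_ge jn' (ler0n _ i) hi (lexx _))).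
have e : expR (1 *- i) * expR (i%:R) = 1 :> R by rewrite -expRD addNr expR0.
rewrite [X in _ <= X](_ : _ = (expR (1 *- i) * expR i%:R) * (2 / n.+1%:R * (u i - u i.+1))).
  by rewrite e mul1r.
by rewrite /u; ring.
Qed.

Lemma expRN_le (T : R) : 0 <= T -> T <= 1 -> expR (- T) <= 1 - T / 2.
Proof.
move=> T0 T1; rewrite expRN.
have h := expR_ge1Dx T.
have he : 0 < expR T := expR_gt0 T.
rewrite -[X in X <= _]mul1r ler_pdivrMr //.
nra.
Qed.

Lemma small_beta n k j : (8 * k.+1 <= n.+1)%N -> (j <= k)%N ->
  1 / (4 * n.+1%:R) <= \int[lebesgue_measure]_(t in `[0, 8 * k.+1%:R / n.+1%:R])
     betaf n j (t : R).
Proof.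
move=> kn jk.
set m : R := n.+1%:R; set T : R := 8 * k.+1%:R / m.
have hm : 0 < m by rewrite ltr0n.
have hk : 1 <= k.+1%:R :> R by rewrite ler1n.
have hkm : 8 * k.+1%:R <= m by rewrite /m -natrM ler_nat.
have T0 : 0 < T by rewrite /T divr_gt0 // mulr_gt0 // ltr0n.
have T1 : T <= 1 by rewrite /T ler_pdivrMr // mul1r.
have jn : (j <= n)%N by lia.
have hb := int_beta_ge jn (lexx 0) T0 (lexx T).
apply: le_trans hb.
rewrite expR0 noise_p0 Gc0 mulr1.
have hp := expRN_le (ltW T0) T1.
have hmT : m * T = 8 * k.+1%:R by rewrite /T mulrC divfK // gt_eqF.
have hmp : 2 * k.+1%:R <= m * noise_p T.
  rewrite /noise_p.
  have : m * ((1 - expR (- T)) / 2) >= m * (T / 4).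
    by apply: ler_wpM2l; [exact: ltW | lra].
  lra.
have hj : (j%:R : R) <= k%:R by rewrite ler_nat.
have hk' : k.+1%:R = k%:R + 1 :> R by rewrite -natr1.
have h1 : 1 <= m * noise_p T by lra.
have h2 : 2 * j%:R <= m * noise_p T by lra.
have ht := tail_ge (noise_p_ge0 (ltW T0)) (noise_p_le1 T) h1 h2 (ltac:(lia) : (j <= n.+1)%N).
have -> : 1 / (4 * m) = 2 / m * (1 / 8) by field; rewrite gt_eqF.
by rewrite ler_wpM2l // divr_ge0 // ltW.
Qed.
End S.

Local Close Scope classical_set_scope.
Section S. Variable R : realType.

Definition anti n (x : cube n) : cube n := [ffun i => ~~ x i].

Lemma hammingE n (x y : cube n) : hamming x y = #|[set i | x i != y i]|.
Proof.
apply: eq_card => i; rewrite inE /=.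
by apply/idP/idP => [/set_mem|h]; [ | apply/mem_set].
Qed.

Lemma hamming_le n (x y : cube n) : (hamming x y <= n)%N.
Proof. by rewrite hammingE; apply: (leq_trans (max_card _)); rewrite card_ord. Qed.

Lemma hamming_anti n (x y : cube n) : hamming (anti x) y = (n - hamming x y)%N.
Proof.
rewrite !hammingE.
have -> : [set i | anti x i != y i] = ~: [set i | x i != y i].
  by apply/setP => i; rewrite !inE /anti ffunE; case: (x i); case: (y i).
by rewrite cardsCs card_ord finset.setCK.
Qed.

Lemma anti_inj n : injective (@anti n).
Proof.
move=> x y h; apply/ffunP => i.
by have := congr1 (fun z : cube n => z i) h; rewrite /anti !ffunE => /negb_inj.
Qed.

Lemma Sph_anti n j (g : fn R n) x : (j <= n)%N -> Sph j g (anti x) = Sph (n - j) g x.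
Proof.
move=> jn; rewrite /Sph bin_sub //; congr (_ * _).
apply: eq_bigl => y; rewrite hamming_anti.
have := hamming_le x y; set h := hamming x y => hn.
apply/eqP/eqP; lia.
Qed.

Lemma Sph_ge0 n k (g : fn R n) x : (forall y, 0 <= g y) -> 0 <= Sph k g x.
Proof.
move=> g0; rewrite /Sph; apply: mulr_ge0; first by rewrite invr_ge0 ler0n.
by apply: sumr_ge0 => y _.
Qed.

Lemma Sph0 n (g : fn R n) x : Sph 0 g x = g x.
Proof.
rewrite /Sph bin0 invr1 mul1r (big_pred1 x) // => y /=.
rewrite hammingE cards_eq0; apply/eqP/eqP => [h | ->].
  apply/ffunP => i; case: (y i =P x i) => // /eqP hi.
  have : i \in [set i | x i != y i] by rewrite inE eq_sym.
  by rewrite h inE.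
by apply/setP => i; rewrite !inE eqxx.
Qed.

Lemma sum_abs_ge n (f : fn R n) x : `|f x| <= \sum_y `|f y|.
Proof.
rewrite (bigD1 x) //= lerDl; exact: sumr_ge0.
Qed.

Lemma Sph_abs n k (f : fn R n) x : `|Sph k f x| <= \sum_y `|f y|.
Proof.
rewrite /Sph normrM.
have hc : `|('C(n, k)%:R : R)^-1| <= 1.
  rewrite ger0_norm ?invr_ge0 ?ler0n //.
  case: (posnP 'C(n, k)) => [-> | hp]; first by rewrite invr0 ler01.
  by rewrite invf_le1 ?ltr0n // ler1n.
apply: (le_trans (ler_wpM2r (normr_ge0 _) hc)); rewrite mul1r.
apply: (le_trans (ler_norm_sum _ _ _)).
rewrite [X in _ <= X](bigID (fun y => hamming x y == k)) /= lerDl.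
exact: sumr_ge0.
Qed.
End S.

Local Open Scope classical_set_scope.

Section S. Variable R : realType.

Lemma int1 (T : R) : 0 < T -> \int[lebesgue_measure]_(t in `[0, T]) (1 : R) = T.
Proof.
move=> T0; have := @Rintegral_cst _ _ R (@lebesgue_measure R) `[0, T] (measurable_itv _) 1.
rewrite /cst => ->; have := @lebesgue_measure_itv R `[0, T]%R; move=> /= ->.
by rewrite lte_fin T0 /= mul1r subr0.
Qed.

Lemma Ibeta_ge0 n k (T : R) : 0 <= \int[lebesgue_measure]_(t in `[0, T]) betaf n k t.
Proof.
apply: Rintegral_ge0 => t /=; rewrite in_itv /= => /andP[t0 _]; exact: betaf_ge0.
Qed.

Lemma Ibeta_le n k (T : R) : 0 < T -> \int[lebesgue_measure]_(t in `[0, T]) betaf n k t <= T.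
Proof.
move=> T0; rewrite -[X in _ <= X]int1 //.
apply: le_Rintegral => //.
- exact: cint (@betaf_cont _ n k).
- by apply: cint; exact: cst_continuous.
move=> t /=; rewrite in_itv /= => /andP[t0 _].
by apply: bt_le1; [exact: noise_p_ge0 | exact: noise_p_le1].
Qed.

Definition S1 n (f : fn R n) := \sum_y `|f y|.

Lemma S1_ge0 n (f : fn R n) : 0 <= S1 f.
Proof. by apply: sumr_ge0 => y _. Qed.

Lemma SenN_abs n (T : R) (f : fn R n) x : 0 <= T -> `|SenN T f x| <= n.+1%:R * S1 f.
Proof.
move=> T0'; case: (eqVneq T 0) => [-> | Tn].
  rewrite /SenN eqxx; apply: (le_trans (sum_abs_ge f x)).
  by rewrite -[X in X <= _]mul1r ler_wpM2r ?S1_ge0 // ler1n.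
have T0 : 0 < T by rewrite lt_neqAle eq_sym Tn T0'.
rewrite SenN_expand // normrM ger0_norm; last by rewrite invr_ge0 ltW.
rewrite ler_pdivrMl //.
apply: (le_trans (ler_norm_sum _ _ _)).
apply: (@le_trans _ _ (\sum_(k < n.+1) S1 f * T)).
  apply: ler_sum => k _; rewrite normrM (ger0_norm (Ibeta_ge0 _ _ _)).
  apply: ler_pM => //; [exact: Ibeta_ge0 | exact: Sph_abs | exact: Ibeta_le].
rewrite sumr_const card_ord -mulr_natl mulr1 le_eqVlt; apply/orP; left; apply/eqP; ring.
Qed.

Lemma SenN_set_sup n (f : fn R n) x :
  has_sup [set SenN T f x | T in [set T : R | 0 <= T]].
Proof.
split; first by exists (SenN 0 f x); exists 0; rewrite /= ?lexx.
exists (n.+1%:R * S1 f) => y [T T0 <-].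
exact: le_trans (ler_norm _) (SenN_abs f x T0).
Qed.

Lemma MSenN_ge n (T : R) (f : fn R n) x : 0 <= T -> SenN T f x <= MSenN f x.
Proof.
move=> T0; rewrite /MSenN /maxop; apply: sup_upper_bound; first exact: SenN_set_sup.
by exists T.
Qed.

Lemma SenN0 n (f : fn R n) x : SenN 0 f x = f x.
Proof. by rewrite /SenN eqxx. Qed.

Lemma MSenN_ge_f n (f : fn R n) x : f x <= MSenN f x.
Proof. by rewrite -{1}(SenN0 f x); apply: MSenN_ge. Qed.

Lemma MSenN_le n (f : fn R n) x : MSenN f x <= n.+1%:R * S1 f.
Proof.
rewrite /MSenN /maxop; apply: ge_sup; first by exists (SenN 0 f x); exists 0; rewrite /= ?lexx.
move=> y [T T0 <-]; exact: le_trans (ler_norm _) (SenN_abs f x T0).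
Qed.

Lemma MSenN_abs n (f : fn R n) x : `|MSenN f x| <= n.+1%:R * S1 f.
Proof.
rewrite ler_norml MSenN_le andbT.
have h1 := MSenN_ge_f f x.
have h2 : - (n.+1%:R * S1 f) <= f x.
  have := sum_abs_ge f x; rewrite -/(S1 f) => h.
  have h3 : S1 f <= n.+1%:R * S1 f by rewrite -[X in X <= _]mul1r ler_wpM2r ?S1_ge0 // ler1n.
  have := ler_norm (- f x); rewrite normrN; lra.
lra.
Qed.

Lemma SenS0 n (f : fn R n) x : SenS 0 f x = f x.
Proof. by rewrite /SenS big_ord1 Sph0 invr1 mul1r. Qed.

Lemma MSenS_bounds n (f : fn R n) x (u : R) :
  (forall k, (k <= n)%N -> SenS k f x <= u) -> f x <= MSenS f x /\ MSenS f x <= u.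
Proof.
move=> hu; rewrite /MSenS /maxop; split.
  rewrite -(SenS0 f x); apply: sup_upper_bound; last by exists 0%N.
  split; first by exists (SenS 0 f x); exists 0%N.
  by exists u => y [k kn <-]; exact: hu.
apply: ge_sup; first by exists (SenS 0 f x); exists 0%N.
by move=> y [k kn <-]; exact: hu.
Qed.
End S.

Section S. Variable R : realType.

Lemma expR_nat_ge i : 2 ^+ i <= expR (i%:R : R).
Proof.
elim: i => [|i IH]; first by rewrite expr0 expR0.
rewrite exprS -[i.+1]addn1 natrD expRD mulrC; apply: ler_pM => //.
by have := expR_ge1Dx (1 : R); lra.
Qed.

Lemma geo_sum N : \sum_(i < N) i.+1%:R * (2 ^+ i : R)^-1 = 4 - 2 * N.+2%:R * (2 ^+ N)^-1.
Proof.
elim: N => [|N IH]; first by rewrite big_ord0 expr0 invr1 mulr1; lra.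
rewrite big_ord_recr /= IH exprS.
have h : (2 ^+ N : R) != 0 by rewrite expf_neq0 // pnatr_eq0.
rewrite -!natr1.
by field; rewrite add0r; exact: h.
Qed.

Lemma sum_exp_le N : \sum_(i < N) i.+1%:R * expR (- (i%:R : R)) <= 4.
Proof.
apply: (@le_trans _ _ (\sum_(i < N) i.+1%:R * (2 ^+ i : R)^-1)).
  apply: ler_sum => i _; apply: ler_wpM2l; first exact: ler0n.
  rewrite expRN lef_pV2 ?posrE ?expR_gt0 ?exprn_gt0 //; exact: expR_nat_ge.
rewrite geo_sum; suff : 0 <= 2 * N.+2%:R * (2 ^+ N : R)^-1 by lra.
by rewrite mulr_ge0 // ?invr_ge0 ?exprn_ge0 // mulr_ge0 // ler0n.
Qed.

Lemma MSenN_ge0 n (g : fn R n) x : (forall y, 0 <= g y) -> 0 <= MSenN g x.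
Proof. by move=> g0; exact: le_trans (g0 x) (MSenN_ge_f g x). Qed.

Lemma small_case n k (g : fn R n) x : (forall y, 0 <= g y) -> (8 * k.+1 <= n.+1)%N ->
  SenS k g x <= 32 * MSenN g x.
Proof.
move=> g0 kn.
set m : R := n.+1%:R; set T : R := 8 * k.+1%:R / m.
have hm : 0 < m by rewrite ltr0n.
have T0 : 0 < T by rewrite /T divr_gt0 // mulr_gt0 // ltr0n.
apply: (@le_trans _ _ (32 * SenN T g x)); last by rewrite ler_wpM2l // MSenN_ge // ltW.
rewrite SenN_expand //.
have kn' : (k.+1 <= n.+1)%N by lia.
have h1 : \sum_(j < k.+1) Sph j g x * (1 / (4 * m)) <=
    \sum_(k0 < n.+1) Sph k0 g x * \int[lebesgue_measure]_(t in `[0, T]) betaf n k0 t.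
  rewrite (big_ord_widen n.+1 (fun j => Sph j g x * (1 / (4 * m)))) //.
  rewrite [X in _ <= X](bigID (fun j : 'I_n.+1 => (j < k.+1)%N)) /=.
  apply: ler_wpDr.
    apply: sumr_ge0 => j _; apply: mulr_ge0; [exact: Sph_ge0 | exact: Ibeta_ge0].
  apply: ler_sum => j jk; apply: ler_wpM2l; first exact: Sph_ge0.
  by apply: small_beta => //; rewrite -ltnS.
rewrite -mulr_suml in h1.
have e : SenS k g x = 32 * (T^-1 * ((\sum_(j < k.+1) Sph j g x) * (1 / (4 * m)))).
  rewrite /SenS /T; field; rewrite ?gt_eqF //; rewrite addrC natr1 pnatr_eq0 //.
rewrite e ler_wpM2l //; rewrite ler_wpM2l //; by rewrite invr_ge0 ltW.
Qed.

Lemma middle n (g : fn R n) y : (forall z, 0 <= g z) ->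
  (n.+1%:R)^-1 * \sum_(j < n.+1 | (2 * j <= n)%N) Sph j g y <= 8 * MSenN g y.
Proof.
move=> g0; set M := MSenN g y.
have M0 : 0 <= M by exact: MSenN_ge0.
have hm : 0 < n.+1%:R :> R by rewrite ltr0n.
set N := (2 * n.+1)%N.
set L := \sum_(i < N) i.+1%:R * expR (- (i%:R : R)) * SenN i.+1%:R g y.
have hL1 : L <= 4 * M.
  apply: (@le_trans _ _ (\sum_(i < N) i.+1%:R * expR (- (i%:R : R)) * M)).
    apply: ler_sum => i _; apply: ler_wpM2l.
      by apply: mulr_ge0; [exact: ler0n | exact: expR_ge0].
    by apply: MSenN_ge; exact: ler0n.
  by rewrite -mulr_suml ler_wpM2r // sum_exp_le.
have hL2 : L = \sum_(j < n.+1) Sph j g y *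
    \sum_(i < N) expR (- (i%:R : R)) * \int[lebesgue_measure]_(t in `[0, i.+1%:R]) betaf n j t.
  rewrite /L.
  under eq_bigr => i _.
    rewrite SenN_expand ?ltr0n // mulrA -[i.+1%:R * _ * _]mulrA.
    rewrite [expR _ * _^-1]mulrC mulrA mulfV ?pnatr_eq0 // mul1r mulr_sumr.
    over.
  rewrite exchange_big /=; apply: eq_bigr => j _; rewrite mulr_sumr.
  by apply: eq_bigr => i _; ring.
have hL3 : (2 * n.+1%:R)^-1 * \sum_(j < n.+1 | (2 * j <= n)%N) Sph j g y <= L.
  rewrite hL2 mulr_sumr [X in _ <= X](bigID (fun j : 'I_n.+1 => (2 * j <= n)%N)) /=.
  apply: ler_wpDr.
    apply: sumr_ge0 => j _; apply: mulr_ge0; first exact: Sph_ge0.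
    apply: sumr_ge0 => i _; apply: mulr_ge0; [exact: expR_ge0 | exact: Ibeta_ge0].
  apply: ler_sum => j hj; rewrite mulrC; apply: ler_wpM2l; first exact: Sph_ge0.
  by have := @mix_beta R n j hj; rewrite mul1r.
have h2 : 0 <= \sum_(j < n.+1 | (2 * j <= n)%N) Sph j g y.
  by apply: sumr_ge0 => j _; exact: Sph_ge0.
have -> : (n.+1%:R)^-1 * \sum_(j < n.+1 | (2 * j <= n)%N) Sph j g y =
  2 * ((2 * n.+1%:R)^-1 * \sum_(j < n.+1 | (2 * j <= n)%N) Sph j g y).
  by field; rewrite gt_eqF.
apply: (le_trans (ler_wpM2l (ler0n _ 2) (le_trans hL3 hL1))).
by rewrite mulrA -natrM.
Qed.

Lemma split_anti n (g : fn R n) x : (forall z, 0 <= g z) ->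
  \sum_(j < n.+1) Sph j g x <= \sum_(j < n.+1 | (2 * j <= n)%N) Sph j g x +
     \sum_(j < n.+1 | (2 * j <= n)%N) Sph j g (anti x).
Proof.
move=> g0; rewrite (bigID (fun j : 'I_n.+1 => (2 * j <= n)%N)) /= lerD2l.
rewrite (reindex_inj rev_ord_inj) /= big_mkcond [X in _ <= X]big_mkcond /=.
apply: ler_sum => j _.
have jn : (j <= n)%N by rewrite -ltnS.
case: ifP => h1.
  have h2 : (2 * j <= n)%N by lia.
  by rewrite h2 Sph_anti.
by case: ifP => _ //; exact: Sph_ge0.
Qed.

Lemma big_case n k (g : fn R n) x : (forall z, 0 <= g z) -> (k <= n)%N ->
  (n.+1 < 8 * k.+1)%N -> SenS k g x <= 64 * (MSenN g x + MSenN g (anti x)).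
Proof.
move=> g0 kn hk.
have hm : 0 < n.+1%:R :> R by rewrite ltr0n.
have hk1 : 0 < k.+1%:R :> R by rewrite ltr0n.
have hkm : n.+1%:R <= 8 * k.+1%:R :> R by rewrite -natrM ler_nat ltnW.
set A := \sum_(j < n.+1 | (2 * j <= n)%N) Sph j g x.
set B := \sum_(j < n.+1 | (2 * j <= n)%N) Sph j g (anti x).
have hA := middle x g0; have hB := middle (anti x) g0.
rewrite -/A in hA; rewrite -/B in hB.
have hS := split_anti x g0; rewrite -/A -/B in hS.
have hS0 : 0 <= \sum_(j < n.+1) Sph j g x by apply: sumr_ge0 => j _; exact: Sph_ge0.
have h1 : SenS k g x <= (k.+1%:R)^-1 * \sum_(j < n.+1) Sph j g x.
  rewrite /SenS; apply: ler_wpM2l; first by rewrite invr_ge0 ltW.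
  rewrite (big_ord_widen n.+1 (fun j => Sph j g x)) //.
  rewrite [X in _ <= X](bigID (fun j : 'I_n.+1 => (j < k.+1)%N)) /= lerDl.
  by apply: sumr_ge0 => j _; exact: Sph_ge0.
apply: (le_trans h1).
have h2 : (k.+1%:R)^-1 <= 8 / n.+1%:R :> R.
  by rewrite ler_pdivlMr // mulrC ler_pdivrMr // mul1r.
apply: (le_trans (ler_wpM2r hS0 h2)).
apply: (le_trans (ler_wpM2l _ hS)); first by rewrite divr_ge0 // ltW.
have -> : 8 / n.+1%:R * (A + B) = 8 * ((n.+1%:R)^-1 * A) + 8 * ((n.+1%:R)^-1 * B) :> R by ring.
rewrite -mulrDr; have -> : 64 * (MSenN g x + MSenN g (anti x)) = 8 * (8 * MSenN g x + 8 * MSenN g (anti x)) :> R by ring.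
by apply: ler_wpM2l => //; exact: lerD.
Qed.

Lemma pointwise n k (g : fn R n) x : (forall z, 0 <= g z) -> (k <= n)%N ->
  SenS k g x <= 64 * (MSenN g x + MSenN g (anti x)).
Proof.
move=> g0 kn; case: (leqP (8 * k.+1) n.+1) => hk; last exact: big_case.
apply: (le_trans (small_case x g0 hk)).
have h1 := MSenN_ge0 x g0; have h2 := MSenN_ge0 (anti x) g0.
lra.
Qed.
End S.

Section S. Variable R : realType.

Lemma sqr_normr (x : R) : `|x| ^+ 2 = x ^+ 2.
Proof. exact: real_normK (num_real x). Qed.

Lemma l2_ge0 n (f : fn R n) : 0 <= l2norm f.
Proof. exact: sqrtr_ge0. Qed.

Lemma l2_abs n (f : fn R n) : l2norm (fun y => `|f y|) = l2norm f.
Proof. by rewrite /l2norm; congr Num.sqrt; apply: eq_bigr => y _; rewrite sqr_normr. Qed.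

Lemma sq_sum_ge0 n (f : fn R n) : 0 <= \sum_x f x ^+ 2.
Proof. by apply: sumr_ge0 => y _; exact: sqr_ge0. Qed.

Lemma l2_pos n (f : fn R n) x : f x != 0 -> 0 < l2norm f.
Proof.
move=> fx; rewrite /l2norm sqrtr_gt0 (bigD1 x) //=.
apply: (lt_le_trans (y := f x ^+ 2)); first by rewrite -sqr_normr exprn_gt0 // normr_gt0.
rewrite lerDl; apply: sumr_ge0 => y _; exact: sqr_ge0.
Qed.

Lemma abs_le_l2 n (f : fn R n) y : `|f y| <= l2norm f.
Proof.
rewrite -sqrtr_sqr /l2norm ler_sqrt; last exact: sq_sum_ge0.
rewrite (bigD1 y) //= lerDl; apply: sumr_ge0 => z _; exact: sqr_ge0.
Qed.

Lemma l2_bound n (h : fn R n) (c : R) : (forall x, `|h x| <= c) ->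
  l2norm h <= #|{: cube n}|%:R * c.
Proof.
move=> hc; have c0 : 0 <= c by exact: le_trans (normr_ge0 _) (hc (anti [ffun => false])).
set N := #|{: cube n}|.
have N1 : (1 <= N)%N by apply/card_gt0P; exists [ffun => false].
have N0 : 0 <= N%:R * c :> R by rewrite mulr_ge0 // ler0n.
rewrite -(ger0_norm N0) -sqrtr_sqr /l2norm ler_sqrt; last exact: sqr_ge0.
apply: (@le_trans _ _ (\sum_(x : cube n) c ^+ 2)).
  apply: ler_sum => x _; rewrite -sqr_normr; apply: lerXn2r; rewrite ?inE //.
rewrite sumr_const -/N -mulr_natl exprMn.
have hN : (N%:R : R) <= N%:R ^+ 2.
  by rewrite expr2 -natrM ler_nat; apply: leq_pmull.
rewrite mulr1 -mulr_natl; have := sqr_ge0 c; nra.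
Qed.

Lemma S1_le n (f : fn R n) : S1 f <= #|{: cube n}|%:R * l2norm f.
Proof.
rewrite /S1 mulr_natl -sumr_const; apply: ler_sum => y _; exact: abs_le_l2.
Qed.

Lemma l2_final n (u A : fn R n) (K : R) : 0 <= K -> (forall x, 0 <= A x) ->
  (forall x, `|u x| <= K * (A x + A (anti x))) -> l2norm u <= 2 * K * l2norm A.
Proof.
move=> K0 A0 hu.
have e : \sum_x A (anti x) ^+ 2 = \sum_x A x ^+ 2.
  by rewrite [RHS](reindex_inj (@anti_inj n)).
have h1 : \sum_x u x ^+ 2 <= (2 * K) ^+ 2 * \sum_x A x ^+ 2.
  apply: (@le_trans _ _ (\sum_x 2 * K ^+ 2 * (A x ^+ 2 + A (anti x) ^+ 2))).
    apply: ler_sum => x _.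
    have := hu x; rewrite ler_norml => /andP [hl hr].
    have a1 := A0 x; have a2 := A0 (anti x).
    set a := A x in hl hr a1 *; set b := A (anti x) in hl hr a2 *.
    have p1 : 0 <= (K * (a + b) - u x) * (K * (a + b) + u x).
      by apply: mulr_ge0; lra.
    have p2 : 0 <= K ^+ 2 * (a - b) ^+ 2 by apply: mulr_ge0; exact: sqr_ge0.
    clearbody a b.
    have -> : 2 * K ^+ 2 * (a ^+ 2 + b ^+ 2) = (K * (a + b)) ^+ 2 + K ^+ 2 * (a - b) ^+ 2 by ring.
    have -> : (K * (a + b)) ^+ 2 = (K * (a + b) - u x) * (K * (a + b) + u x) + u x ^+ 2 by ring.
    lra.
  rewrite -mulr_sumr big_split /= e.
  by rewrite le_eqVlt; apply/orP; left; apply/eqP; ring.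
have hK : 0 <= 2 * K by lra.
rewrite /l2norm -(ger0_norm hK) -sqrtr_sqr -sqrtrM ?sqr_ge0 // ler_sqrt //.
by apply: mulr_ge0; [exact: sqr_ge0 | exact: sq_sum_ge0].
Qed.

Lemma Sph_mono n l (f g : fn R n) x : (forall y, f y <= g y) -> Sph l f x <= Sph l g x.
Proof.
move=> fg; rewrite /Sph; apply: ler_wpM2l; first by rewrite invr_ge0 ler0n.
by apply: ler_sum => y _.
Qed.

Lemma SenS_mono n k (f g : fn R n) x : (forall y, f y <= g y) -> SenS k f x <= SenS k g x.
Proof.
move=> fg; rewrite /SenS; apply: ler_wpM2l; first by rewrite invr_ge0 ler0n.
by apply: ler_sum => l _; exact: Sph_mono.
Qed.

Lemma MSenN_opnorm n (h : fn R n) x : h x != 0 ->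
  l2norm (MSenN h) <= opnorm (@MSenN R n) * l2norm h.
Proof.
move=> hx; have hp := l2_pos hx.
set N := #|{: cube n}|.
have hs : has_sup [set l2norm (MSenN f) / l2norm f | f in [set f : fn R n | exists x, f x != 0]].
  split; first by exists (l2norm (MSenN h) / l2norm h); exists h => //; exists x.
  exists (N%:R * (n.+1%:R * N%:R)) => r [f [z fz] <-].
  have fp := l2_pos fz.
  rewrite ler_pdivrMr //.
  apply: (le_trans (l2_bound (c := n.+1%:R * S1 f) _)); first exact: MSenN_abs.
  rewrite -/N -!mulrA; apply: ler_wpM2l; first exact: ler0n.
  apply: ler_wpM2l; first exact: ler0n.
  exact: S1_le.
have := sup_upper_bound hs (ex_intro2 _ _ h (ex_intro _ x hx) erefl).
rewrite -/(opnorm (@MSenN R n)) ler_pdivrMr //.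
Qed.
End S.

Unset Implicit Arguments.
Theorem proposition2 (R : realType) :
  exists C : R, forall n : nat, (1 <= n)%N ->
    opnorm (@MSenS R n) <= C * opnorm (@MSenN R n).
Proof.
exists 128 => n _.
rewrite {1}/opnorm; apply: ge_sup.
  exists (l2norm (@MSenS R n (fun _ => 1)) / l2norm (fun _ : cube n => (1 : R))).
  exists (fun _ => 1) => //; exists [ffun => false]; exact: oner_neq0.
move=> r [f [x fx] <-].
set g : fn R n := fun y => `|f y|.
have g0 : forall y, 0 <= g y by move=> y; exact: normr_ge0.
set A := MSenN g.
have A0 : forall y, 0 <= A y by move=> y; exact: MSenN_ge0.
have hu : forall z, `|MSenS f z| <= 64 * (A z + A (anti z)).
  move=> z.
  have hk : forall k, (k <= n)%N -> SenS k f z <= 64 * (A z + A (anti z)).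
    move=> k kn; apply: le_trans (pointwise z g0 kn).
    by apply: SenS_mono => y; exact: ler_norm.
  have [h1 h2] := MSenS_bounds hk.
  rewrite ler_norml h2 andbT.
  have h3 : - g z <= f z by rewrite /g lerNnormlW.
  have h4 : g z <= A z by exact: MSenN_ge_f.
  have := A0 (anti z); lra.
have hl := l2_final (ler0n _ 64) A0 hu.
have gx : g x != 0 by rewrite /g normr_eq0.
have hA := MSenN_opnorm gx.
rewrite /g l2_abs in hA.
have fp := l2_pos fx.
rewrite ler_pdivrMr //.
apply: (le_trans hl); rewrite -natrM -mulrA; apply: ler_wpM2l => //; exact: hA.
Qed.
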